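(* Every disconnected graph $H$ is the $\operatorname{IR}$-graph of infinitely many graphs; that is, there are infinitely many (pairwise non-isomorphic) graphs $G$ with $G(\operatorname{IR})\cong H$.
   Context: All graphs are finite and simple. For a graph $G=(V,E)$, $D\subseteq V$ and $v\in D$, $\operatorname{PN}(v,D)=N[v]-N[D-\{v\}]$ (closed neighbourhoods). $D$ is irredundant if $\operatorname{PN}(v,D)\neq\varnothing$ for all $v\in D$; $\operatorname{IR}(G)$ is the maximum cardinality of an irredundant set and an $\operatorname{IR}(G)$-set is an irredundant set of cardinality $\operatorname{IR}(G)$. The $\operatorname{IR}$-graph $G(\operatorname{IR})$ has the $\operatorname{IR}(G)$-sets as vertices, with $D\sim D'$ iff there exist $u\in D$, $v\in D'$, $uv\in E(G)$, with $D'=(D-\{u\})\cup\{v\}$. *)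

(* Defs.v *)
From mathcomp Require Import all_boot.
Set Implicit Arguments. Unset Strict Implicit. Unset Printing Implicit Defensive.

Record sgraph := SGraph {
  vert : finType;
  adj : rel vert;
  adj_sym : symmetric adj;
  adj_irr : irreflexive adj }.

Section IR.
Variable G : sgraph.
Local Notation V := (vert G).

Definition cnbh (v : V) : {set V} := [set w | (w == v) || adj v w].
Definition cnbhS (S : {set V}) : {set V} := \bigcup_(v in S) cnbh v.

Definition PN (v : V) (D : {set V}) : {set V} := cnbh v :\: cnbhS (D :\ v).

Definition irredundant (D : {set V}) : bool := [forall v in D, PN v D != set0].

Definition IRnum : nat := \max_(D : {set V} | irredundant D) #|D|.

Definition IRset (D : {set V}) : bool := irredundant D && (#|D| == IRnum).

Definition IRvert : Type := {D : {set V} | IRset D}.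

Definition IRadj : rel IRvert := fun D D' =>
  [exists u in val D, exists v in val D',
     adj u v && (val D' == (val D :\ u) :|: [set v])].
End IR.

Definition disconnected (H : sgraph) : Prop :=
  exists x y : vert H, ~~ connect (@adj H) x y.

Definition rel_iso (T1 T2 : finType) (r1 : rel T1) (r2 : rel T2) : Prop :=
  exists f : T1 -> T2, bijective f /\ forall x y, r1 x y = r2 (f x) (f y).

Definition graph_iso (G1 G2 : sgraph) : Prop := rel_iso (@adj G1) (@adj G2).

(* Main.v *)
Require Import Defs.
From mathcomp Require Import all_boot zify.
Set Implicit Arguments. Unset Strict Implicit. Unset Printing Implicit Defensive.

Section General.
Variable G : sgraph.
Local Notation V := (vert G).

Lemma in_cnbh (v w : V) : (w \in cnbh v) = (w == v) || adj v w.
Proof. by rewrite inE. Qed.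

Lemma irrP (D : {set V}) :
  irredundant D ->
  forall v, v \in D -> exists w, w \in cnbh v /\ forall z, z \in D -> z != v -> w \notin cnbh z.
Proof.
move=> /forallP irr v vD.
have := irr v; rewrite vD /= => /set0Pn [w]; rewrite /PN inE => /andP [wS wv].
exists w; split => // z zD zv; apply: contra wS => wz.
by apply/bigcupP; exists z => //; rewrite !inE zv.
Qed.

Lemma irrI (D : {set V}) :
  (forall v, v \in D -> exists w, w \in cnbh v /\ forall z, z \in D -> z != v -> w \notin cnbh z) ->
  irredundant D.
Proof.
move=> H; apply/forallP => v; apply/implyP => vD.
have [w [wv wz]] := H v vD.
apply/set0Pn; exists w; rewrite /PN inE wv andbT.
apply/bigcupP => -[z]; rewrite !inE => /andP [zv zD] wz'.
by move/negP: (wz z zD zv); rewrite in_cnbh.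
Qed.

End General.

Section Cons.
Variables (H : sgraph) (side : vert H -> bool) (k : nat).
Local Notation V := (vert H).
Local Notation K := k.+1.
Definition W := (V + (bool * 'I_K))%type.

Definition adjG (a b : W) : bool :=
  match a, b with
  | inl u, inl v => adj u v
  | inl v, inr (b, i) => (b == side v) || (i == 0 :> nat)
  | inr (b, i), inl v => (b == side v) || (i == 0 :> nat)
  | inr (b, i), inr (b', j) => if b == b' then i != j else (i == j) && (i != 0 :> nat)
  end.

Lemma adjG_sym : symmetric adjG.
Proof.
case=> [u|[b i]] [v|[b' j]] //=; first exact: adj_sym.
by rewrite (eq_sym b') (eq_sym j); case: (i =P j) => [->|_] //.
Qed.

Lemma adjG_irr : irreflexive adjG.
Proof. by case=> [u|[b i]] /=; [exact: adj_irr | rewrite !eqxx]. Qed.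

Definition Gc : sgraph := SGraph adjG_sym adjG_irr.
End Cons.


Section Props.
Variables (H : sgraph) (side : vert H -> bool) (k : nat).
Hypothesis side_ok : forall u v, adj u v -> side u = side v.
Hypothesis both : forall b, exists v, side v = b.
Local Notation V := (vert H).
Local Notation K := k.+1.
Local Notation GG := (Gc side k).
Local Notation WW := (W H k).
Local Notation N z := (@cnbh GG z).

Definition core b : {set WW} := [set inr (b, i) | i : 'I_K].
Definition T v : {set WW} := inl v |: core (side v).

Lemma inN (w z : WW) : (w \in N z) = (w == z) || adjG side z w.
Proof. by rewrite inE. Qed.

Lemma eq_inr (a b : bool * 'I_K) : (inr a == inr b :> WW) = (a.1 == b.1) && (a.2 == b.2).
Proof. by case: a b => [a1 a2] [b1 b2] /=; apply/eqP/andP => [[-> ->]|[/eqP-> /eqP->]]. Qed.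
Lemma eq_inl (u v : V) : (inl u == inl v :> WW) = (u == v).
Proof. by apply/eqP/eqP => [[]|->]. Qed.
Lemma eq_lr (u : V) a : (inl u == inr a :> WW) = false.
Proof. by []. Qed.
Lemma eq_rl (u : V) a : (inr a == inl u :> WW) = false.
Proof. by []. Qed.
Lemma eq_ord0 (j : 'I_K) : (j == ord0) = (j == 0 :> nat).
Proof. by []. Qed.
Lemma eq_ord0' (j : 'I_K) : (ord0 == j) = (j == 0 :> nat).
Proof. by rewrite eq_sym. Qed.
Ltac simp := rewrite ?eq_inr ?eq_inl ?eq_lr ?eq_rl /= ?eq_ord0 ?eq_ord0'.

Lemma in_core b z : (z \in core b) = (if z is inr (b', _) then b' == b else false).
Proof.
apply/imsetP/idP.
  by move=> [i _ ->].
by case: z => [//|[b' i]] /eqP ->; exists i.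
Qed.

Lemma in_T v z : (z \in T v) = (z == inl v) || (z \in core (side v)).
Proof. by rewrite !inE. Qed.

Lemma card_core b : #|core b| = K.
Proof. by rewrite card_imset ?card_ord // => i j []. Qed.

Lemma card_T v : #|T v| = K.+1.
Proof. by rewrite cardsU1 card_core in_core. Qed.

Lemma T_irr v : @irredundant GG (T v).
Proof.
apply: irrI => z; rewrite in_T => /orP [/eqP -> | ].
  exists (inr (~~ side v, ord0)); split; first by rewrite inN /= eqxx orbT.
  move=> z'; rewrite in_T in_core; case: z' => [u|[b j]] /=.
    by rewrite orbF => /eqP ->; rewrite eqxx.
  move=> /eqP -> _; rewrite inN; simp.
  by case: (side v) => /=; rewrite ?andbN.
case: z => [a|[b i]]; rewrite in_core //= => /eqP ->.
case: (i =P 0 :> nat) => [i0 | in0].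
  have [u su] := both (~~ side v).
  exists (inl u); split; first by rewrite inN /= i0 eqxx orbT.
  move=> z'; rewrite in_T in_core; case: z' => [u'|[b' j]] /=.
    rewrite orbF => /eqP [->] _; rewrite inN /=.
    apply/negP => /orP [/eqP [uv] | /side_ok].
      by move: su; rewrite uv; case: (side v).
    by rewrite su; case: (side v).
  move=> /eqP -> ji; rewrite inN; simp; rewrite su.
  have j0 : (j == 0 :> nat) = false.
    apply/negbTE; move: ji; simp; rewrite eqxx /=; apply: contra => /eqP j0.
    by apply/eqP/val_inj; rewrite /= j0 i0.
  by rewrite j0 orbF; case: (side v).
exists (inr (~~ side v, i)); split.
  by rewrite inN /= eqxx /=; case: (side v) => /=; apply/eqP.
move=> z'; rewrite in_T in_core; case: z' => [u'|[b' j]] /=.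
  rewrite orbF => /eqP [->] _; rewrite inN /=.
  by case: (side v) => /=; apply/eqP.
move=> /eqP -> ji; rewrite inN /=.
have ji' : j != i by apply: contraNneq ji => ->.
by case: (side v) => /=; rewrite (negbTE ji').
Qed.


Lemma core_case b (S : {set WW}) : @irredundant GG S -> 1 < #|[set i | inr (b, i) \in S]| ->
  (forall z, z \in S -> (z \in core b) || (if z is inl u then side u == b else false)) /\
  (forall u v, inl u \in S -> inl v \in S -> u = v).
Proof.
move=> irr /card_gt1P [x [y [xS yS xy]]]; rewrite !inE in xS yS.
have [i [j [iS jS ij i0]]] : exists i j, [/\ inr (b, i) \in S, inr (b, j) \in S, j != i & (i != 0 :> nat)].
  case: (x =P 0 :> nat) => [x0|x0].
    exists y, x; split => //.
    apply: contra xy => /eqP y0; apply/eqP/val_inj; by rewrite /= x0 y0.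
  by exists x, y; split => //; [rewrite eq_sym | apply/eqP].
have [w [wN wP]] := irrP irr iS.
have jn : inr (b, j) != inr (b, i) :> WW by simp; rewrite eqxx.
have wj := wP _ jS jn.
have wd : w = inr (~~ b, i).
  move: wN wj; clear wP; rewrite !inN; case: w => [u|[b' l]]; simp.
    by rewrite (negbTE i0) !orbF => ->.
  case: (b' =P b) => [->|nb]; first by rewrite eqxx /= (eq_sym l j); case: (j == l).
  have nb' : (b == b') = false by apply/eqP => e; apply: nb; rewrite e.
  rewrite nb' /= => /andP [/eqP -> _] _.
  by move: nb nb'; clear; destruct b, b'.
have Hd : forall z, z \in S -> z != inr (b, i) -> inr (~~ b, i) \notin N z.
  by move=> z zS zn; rewrite -wd; apply: wP.
have part1 : forall z, z \in S -> (z \in core b) || (if z is inl u then side u == b else false).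
  move=> z zS; case: z zS => [u|[b' l]] zS; rewrite in_core /=.
    by move: (Hd _ zS isT); rewrite inN; simp; destruct b; case: (side u).
  case: (b' =P b) => [//|nb].
  have nb' : b' = ~~ b by move: nb; clear; destruct b, b'.
  have := Hd _ zS; rewrite nb' inN; simp; clear nb nb'.
  move=> Hz; move: (Hz ltac:(by case: (b))); rewrite !eqxx /=.
  by rewrite (eq_sym i l); case: (l == i).
split => // u v uS vS.
apply/eqP; apply/negP => /negP uv.
have su : side u = b by move: (part1 _ uS); rewrite in_core /= => /eqP.
have [w' [wN' wP']] := irrP irr uS.
have w1 := wP' _ iS isT.
have w2 := wP' _ vS ltac:(by simp; rewrite eq_sym).
move: wN' w1 w2; clear wP'; rewrite !inN; case: w' => [t|[b' l]]; simp.
  move=> /orP [/eqP -> | /side_ok st]; first by rewrite su eqxx.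
  by rewrite -st su eqxx.
rewrite su; case: (b' =P b) => [->|nb]; first by rewrite eqxx /= (eq_sym l i); case: (i == l).
by move=> /= l0 _; rewrite l0 orbT.
Qed.
Hypothesis big : #|V|.+1 <= k.

Lemma bound (S : {set WW}) : @irredundant GG S ->
  #|S| <= K.+1 /\ (#|S| = K.+1 -> exists v, S = T v).
Proof.
move=> irr.
have core_bound : forall b, 1 < #|[set i | inr (b, i) \in S]| ->
    #|S| <= K.+1 /\ (#|S| = K.+1 -> exists v, S = T v).
  move=> b hb; have [p1 p2] := core_case irr hb.
  case: (pickP (fun v => inl v \in S)) => [v vS | none].
    have sv : side v = b by move: (p1 _ vS); rewrite in_core /= => /eqP.
    have sub : S \subset T v.
      apply/subsetP => z zS; rewrite in_T; move: (p1 _ zS); case: z zS => [u|[b' l]] zS /=.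
        by rewrite (p2 _ _ zS vS) eqxx.
      by rewrite sv !in_core /= orbF.
    split; first by rewrite -(card_T v) subset_leq_card.
    by move=> cS; exists v; apply/eqP; rewrite eqEcard sub card_T cS leqnn.
  have sub : S \subset core b.
    apply/subsetP => z zS; move: (p1 _ zS); case: z zS => [u|[b' l]] zS /=.
      by rewrite none in zS.
    by rewrite orbF.
  have := subset_leq_card sub; rewrite card_core => le.
  split; first by rewrite (leq_trans le).
  by move=> cS; move: le; rewrite cS ltnn.
case: (ltnP 1 #|[set i | inr (false, i) \in S]|) => [h|hf]; first exact: core_bound h.
case: (ltnP 1 #|[set i | inr (true, i) \in S]|) => [h|ht]; first exact: core_bound h.
pose A := [set (inl v : WW) | v in [set: V]].
pose Bf := [set (inr (false, i) : WW) | i in [set i | inr (false, i) \in S]].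
pose Bt := [set (inr (true, i) : WW) | i in [set i | inr (true, i) \in S]].
have sub : S \subset A :|: (Bf :|: Bt).
  apply/subsetP => z zS; case: z zS => [u|[b i]] zS; rewrite !inE.
    by apply/orP; left; apply/imsetP; exists u.
  apply/orP; right; case: b zS => zS; apply/orP; [right|left]; apply/imsetP; exists i => //; by rewrite inE.
have le : #|S| <= #|V| + (1 + 1).
  apply: (leq_trans (subset_leq_card sub)).
  apply: (leq_trans (leq_card_setU _ _).1); apply: leq_add.
    by apply: (leq_trans (leq_imset_card _ _)); rewrite cardsT.
  apply: (leq_trans (leq_card_setU _ _).1); apply: leq_add.
    exact: (leq_trans (leq_imset_card _ _)).
  exact: (leq_trans (leq_imset_card _ _)).
have lt : #|S| < K.+1 by move: le big; clear; lia.
split; first exact: ltnW.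
by move=> cS; move: lt; rewrite cS ltnn.
Qed.

Lemma IRnum_eq : @IRnum GG = K.+1.
Proof.
apply/eqP; rewrite eqn_leq; apply/andP; split.
  by apply/bigmax_leqP => S irr; exact: (bound irr).1.
have [v _] := both true; rewrite -(card_T v).
rewrite /IRnum; apply: (@leq_bigmax_cond _ (fun D => @irredundant GG D) (fun D => #|D|)); exact: T_irr.
Qed.

Lemma T_IRset v : @IRset GG (T v).
Proof. by rewrite /IRset T_irr IRnum_eq card_T eqxx. Qed.

Lemma IRset_T (S : {set WW}) : @IRset GG S -> exists v, S = T v.
Proof. by move=> /andP [irr /eqP c]; rewrite IRnum_eq in c; exact: (bound irr).2 c. Qed.

Lemma inlT u v : (inl u \in T v) = (u == v).
Proof. by rewrite in_T in_core orbF eq_inl. Qed.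

Lemma IRadj_T u v :
  [exists a in T u, exists b in T v, adjG side a b && (T v == (T u :\ a) :|: [set b])] = adj u v.
Proof.
apply/idP/idP.
  move=> /existsP [a] /andP [aT] /existsP [b] /andP [bT] /andP [ab /eqP E].
  have uv : u != v.
    apply/negP => /eqP e; move: E; rewrite e => E.
    have : a \in T v by rewrite -e.
    rewrite {1}E !inE eqxx /= => /eqP ab'.
    by move: ab; rewrite ab' adjG_irr.
  have au : a = inl u.
    apply/eqP; apply: contraT => na.
    have : inl u \in T v.
      by rewrite E !inE eqxx /= andbT eq_sym na.
    by rewrite inlT (negbTE uv).
  have bv : b = inl v.
    have : inl v \in T v by rewrite inlT.
    rewrite {1}E au !inE in_core eq_inl (eq_sym v) (negbTE uv) /=.
    by rewrite eq_sym => /eqP.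
  by move: ab; rewrite au bv.
move=> a; have su := side_ok a.
apply/existsP; exists (inl u); rewrite inlT eqxx /=.
apply/existsP; exists (inl v); rewrite inlT eqxx /= a /=.
rewrite /T setU1K ?in_core // su; apply/eqP; exact: setUC.
Qed.

End Props.

Lemma card_Gc (H : sgraph) (side : vert H -> bool) k : #|vert (Gc side k)| = #|vert H| + (2 * k.+1).
Proof. by rewrite /= card_sum card_prod card_bool card_ord. Qed.


Lemma realize (H : sgraph) (side : vert H -> bool) (k : nat) :
  (forall u v, adj u v -> side u = side v) ->
  (forall b, exists v, side v = b) ->
  #|vert H|.+1 <= k ->
  rel_iso (@IRadj (Gc side k)) (@adj H).
Proof.
move=> side_ok both big.
have [x0 _] := both true.
pose g (v : vert H) : IRvert (Gc side k) := exist _ (T side k v) (T_IRset side_ok both big v).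
pose f (D : IRvert (Gc side k)) : vert H := odflt x0 [pick v | inl v \in val D].
have fK : cancel g f.
  move=> v; rewrite /f /=; case: pickP => [v' /= |none] /=.
    by rewrite inlT => /eqP.
  by move: (none v); rewrite /= inlT eqxx.
have gK : cancel f g.
  move=> D; have [v Dv] := IRset_T side_ok both big (valP D).
  have -> : f D = v by rewrite -(fK v); congr f; apply: val_inj.
  by apply: val_inj; rewrite /= Dv.
exists f; split; first by exists g.
move=> D D'; rewrite -[in LHS](gK D) -[in LHS](gK D').
rewrite /IRadj /=; exact: (IRadj_T k side_ok (f D) (f D')).
Qed.

Unset Implicit Arguments.

Theorem theorem3p1 (H : sgraph) :
  disconnected H ->
  exists F : nat -> sgraph,
    (forall i, rel_iso (@IRadj (F i)) (@adj H)) /\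
    (forall i j, i <> j -> ~ graph_iso (F i) (F j)).
Proof.
move=> [x [y nxy]].
pose side v := ~~ connect (@adj H) x v.
have side_ok : forall u v, adj u v -> side u = side v.
  move=> u v a; rewrite /side; congr negb; apply/idP/idP => h.
    exact: connect_trans h (connect1 a).
  by apply: connect_trans h (connect1 _); rewrite adj_sym.
have both : forall b, exists v, side v = b.
  by case; [exists y | exists x; rewrite /side connect0].
exists (fun i => Gc side (#|vert H|.+1 + i)); split.
  by move=> i; apply: realize => //; rewrite leq_addr.
move=> i j ij [f [bf _]].
have := bij_eq_card bf; rewrite !card_Gc => e.
by apply: ij; lia.
Qed.
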